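(* Let $G$ be a finite, simple, connected graph of order $n\ge 4$. If there exists a vertex $u\in V(G)$ with $\deg(u)=n-3$ such that the two vertices of $V(G)\setminus N[u]$ are not twins, then $\gamma_P(G)=1$.
   Context: Two vertices $x,y$ are twins if $N(x)=N(y)$ or $N[x]=N[y]$. For $U\subseteq V(G)$, $cl(U)$ is obtained by coloring $U$ black and repeatedly applying: if a black vertex has exactly one white neighbor, that neighbor becomes black. $S$ is a power dominating set if $cl(N[S])=V(G)$; $\gamma_P(G)$ is the minimum size of a power dominating set. *)

(* Defs.v *)
From mathcomp Require Import all_boot.
Set Implicit Arguments. Unset Strict Implicit. Unset Printing Implicit Defensive.

Definition simple_graph (T : finType) (e : rel T) : Prop :=
  symmetric e /\ irreflexive e.

Definition connected_graph (T : finType) (e : rel T) : Prop :=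
  forall x y : T, connect e x y.

Definition nbh (T : finType) (e : rel T) (x : T) : {set T} := [set y | e x y].
Definition cnbh (T : finType) (e : rel T) (x : T) : {set T} := x |: nbh e x.

Definition cnbhS (T : finType) (e : rel T) (S : {set T}) : {set T} :=
  \bigcup_(x in S) cnbh e x.

Definition deg (T : finType) (e : rel T) (x : T) : nat := #|nbh e x|.

Definition twins (T : finType) (e : rel T) (x y : T) : Prop :=
  nbh e x = nbh e y \/ cnbh e x = cnbh e y.

Definition prop_closed (T : finType) (e : rel T) (B : {set T}) : bool :=
  [forall v, forall w,
     [&& v \in B, e v w & nbh e v :\: B == [set w]] ==> (w \in B)].

(* cl(U): result of repeatedly applying the propagation rule starting from U,
   i.e. the smallest set containing U that is closed under the rule. *)
Definition cl (T : finType) (e : rel T) (U : {set T}) : {set T} :=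
  \bigcap_(B : {set T} | (U \subset B) && prop_closed e B) B.

Definition power_dominating (T : finType) (e : rel T) (S : {set T}) : bool :=
  cl e (cnbhS e S) == [set: T].

Definition gammaP (T : finType) (e : rel T) : nat :=
  \big[minn/#|T|]_(S : {set T} | power_dominating e S) #|S|.
(* the default #|T| is harmless: S = setT is always power dominating *)

(* Main.v *)
Require Import Defs.
From mathcomp Require Import all_boot.
From mathcomp Require Import zify.

Set Implicit Arguments. Unset Strict Implicit.
Section S.
Variables (T : finType) (e : rel T).
Hypothesis sym : symmetric e.
Hypothesis irr : irreflexive e.

Lemma force (B : {set T}) v w : prop_closed e B -> v \in B -> e v w ->
  (forall z, e v z -> z != w -> z \in B) -> w \in B.
Proof.
move=> /forallP pc vB evw H; apply/negPn/negP => wB.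
have /forallP /(_ w) /implyP H2 := pc v.
move/negP: (wB); apply; apply: H2; rewrite vB evw /=.
apply/eqP/setP => z; rewrite /nbh !inE.
case: (eqVneq z w) => [->|zw]; first by rewrite wB evw.
by rewrite andbC; case ezv: (e v z) => //=; rewrite (H z ezv zw).
Qed.

Lemma last_one (B : {set T}) y w : prop_closed e B -> e y w ->
  (forall z, z != y -> z \in B) -> y \in B.
Proof.
move=> pc eyw H; apply: (force pc (v := w)).
- by apply: H; apply/eqP => wy; rewrite wy irr in eyw.
- by rewrite sym.
- by move=> z _; apply: H.
Qed.

Lemma has_nb (x y : T) : connect e y x -> x != y -> exists w, e y w.
Proof.
move=> /connectP [[|w p] /= P L] xy; first by rewrite L eqxx in xy.
by exists w; case/andP: P.
Qed.

Lemma one_side (B : {set T}) x y v : prop_closed e B -> v \in B -> e v x -> ~~ e v y ->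
  (forall z, z != x -> z != y -> z \in B) -> x \in B.
Proof.
move=> pc vB evx evy H; apply: (force pc vB evx) => z evz zx.
apply: H => //; apply/eqP => zy; by rewrite -zy evz in evy.
Qed.
End S.

Lemma bigmin_le (I : eqType) (r : seq I) (P : pred I) (F : I -> nat) d j :
  j \in r -> P j -> \big[minn/d]_(i <- r | P i) F i <= F j.
Proof.
elim: r => // a r IH; rewrite inE big_cons => /orP [/eqP <- -> | jr Pj].
  by rewrite geq_minl.
case: (P a); last exact: IH.
by rewrite (leq_trans (geq_minr _ _)) // IH.
Qed.

Theorem mainTheorem7 (T : finType) (e : rel T) :
  simple_graph e -> connected_graph e -> 4 <= #|T| ->
  (exists u : T, deg e u = #|T| - 3 /\
     (forall x y : T, x != y -> ~: cnbh e u = [set x; y] -> ~ twins e x y)) ->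
  gammaP e = 1.
Proof.
move=> [sym irr] conn n4 [u [du Htw]].
have c2 : #|~: cnbh e u| == 2.
  have := cardsC (cnbh e u); rewrite /cnbh cardsU1 -/(deg e u) du.
  have -> : u \notin nbh e u by rewrite inE irr.
  move=> h; apply/eqP; lia.
case/cards2P: c2 => x [y [xy Hxy]].
have Hnt := Htw x y xy Hxy.
have inxy z : (z \notin cnbh e u) = ((z == x) || (z == y)).
  by rewrite -in_setC Hxy !inE.
have pd : power_dominating e [set u].
  rewrite /power_dominating eqEsubset subsetT /=; apply/subsetP => z _.
  apply/bigcapP => B /andP [sUB pc].
  have inB : forall w, w \in cnbh e u -> w \in B.
    move=> w wu; apply: (subsetP sUB); apply/bigcupP; exists u; rewrite ?inE //; by move: wu; rewrite /cnbh /nbh !inE.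
  have other : forall w, w != x -> w != y -> w \in B.
    move=> t wx wy; apply: inB; apply/negPn; rewrite inxy; by rewrite (negPf wx) (negPf wy).
  suff [xB yB] : x \in B /\ y \in B.
    case: (boolP (z \in cnbh e u)); first exact: inB.
    by rewrite inxy => /orP [/eqP -> | /eqP ->].
  case: (boolP [exists v, (v \in nbh e u) && (e v x != e v y)]).
  - case/existsP => v /andP [vu exy].
    have vB : v \in B by apply: inB; rewrite /cnbh in_setU1 vu orbT.
    case evx: (e v x) exy => /= exy.
    + have xB : x \in B.
        by apply: (one_side pc vB evx _ other); move: exy; case: (e v y).
      have [w yw] := has_nb (conn y x) xy.
      split=> //; apply: (last_one sym irr pc yw) => w' w'y.
      by case: (eqVneq w' x) => [->|w'x] //; apply: other.
    + have exy' : e v y by move: exy; case: (e v y).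
      have yB : y \in B.
        by apply: (one_side pc vB exy' _ (fun t ty tx => other t tx ty)); rewrite evx.
      have yx : y != x by rewrite eq_sym.
      have [w xw] := has_nb (conn x y) yx.
      split=> //; apply: (last_one sym irr pc xw) => w' w'x.
      by case: (eqVneq w' y) => [->|w'y] //; apply: other.
  - rewrite negb_exists => /forallP H.
    exfalso; apply: Hnt.
    have eq : forall z, z != x -> z != y -> e x z = e y z.
      move=> t zx zy.
      have : t \in cnbh e u by apply/negPn; rewrite inxy (negPf zx) (negPf zy).
      rewrite /cnbh in_setU1 => /orP [/eqP -> | zu].
      + have xu : x \notin cnbh e u by rewrite inxy eqxx.
        have yu : y \notin cnbh e u by rewrite inxy eqxx orbT.
        move: xu yu; rewrite /cnbh /nbh !inE !negb_or => /andP[_ /negPf a] /andP[_ /negPf b].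
        by rewrite (sym x u) a (sym y u) b.
      + have := H t; rewrite zu /= negbK => /eqP.
        by rewrite (sym t x) (sym t y).
    case exy: (e x y); [right|left]; apply/setP => t; rewrite /cnbh /nbh !inE.
    + case: (eqVneq t x) => [->|zx]; first by rewrite ?eqxx /= (sym y x) exy ?orbT.
      case: (eqVneq t y) => [->|zy]; first by rewrite ?eqxx exy ?orbT.
      by rewrite /= eq.
    + case: (eqVneq t x) => [->|zx]; first by rewrite irr (sym y x) exy.
      case: (eqVneq t y) => [->|zy]; first by rewrite exy irr.
      by rewrite eq.
have ge1 : forall S, power_dominating e S -> 0 < #|S|.
  move=> S; rewrite card_gt0; apply: contraL => /eqP ->.
  rewrite /power_dominating /cnbhS big_set0.
  have : cl e set0 \subset set0.
    apply: (bigcap_min set0) => //=; rewrite sub0set /prop_closed.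
    by apply/forallP => v; apply/forallP => w; rewrite inE.
  rewrite subset0 => /eqP ->; apply/negP => /eqP /setP /(_ u); by rewrite !inE.
rewrite /gammaP; apply/eqP; rewrite eqn_leq; apply/andP; split.
  by rewrite -(cards1 u); apply: bigmin_le; rewrite ?mem_index_enum.
apply: (big_ind (fun n => 0 < n)) => //.
- by apply: (leq_trans _ n4).
- by move=> a b ha hb; rewrite leq_min ha hb.
Qed.
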